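(* Let $Q\in\mathbb{R}^{n\times n}$ be symmetric positive definite and let $\mathcal{E}=\{x\in\mathbb{R}^n : x^TQx\le 1\}$. Let $f_d:\mathbb{R}^n\to\mathbb{R}^n$ be continuously differentiable and consider the discrete system $x_{k+1}=f_d(x_k)$. Assume that the function $x\mapsto f_d(x)^TQf_d(x)$ is concave on $\mathbb{R}^n$. Then $\mathcal{E}$ is an invariant set for this discrete system if and only if there exists $\beta\ge 0$ such that $$\beta x^TQx-f_d(x)^TQf_d(x)\ge \beta-1\quad\text{for all } x\in\mathbb{R}^n.$$
   Context: A set $\mathcal{S}\subseteq\mathbb{R}^n$ is an invariant set for the discrete system $x_{k+1}=f_d(x_k)$ if $x_k\in\mathcal{S}$ implies $x_{k+1}\in\mathcal{S}$ for all $k\in\mathbb{N}$. *)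

(* Defs.v *)
From HB Require Import structures.
From mathcomp Require Import all_boot all_order all_algebra.
From mathcomp Require Import all_classical all_reals all_analysis.
Set Implicit Arguments. Unset Strict Implicit. Unset Printing Implicit Defensive.
Import Order.TTheory GRing.Theory Num.Theory.
Import numFieldNormedType.Exports.
Local Open Scope ring_scope.
Local Open Scope classical_set_scope.

(* Vectors of R^n are row vectors 'rV[R]_n; x^T Q x is written
   (x *m Q *m x^T) 0 0. *)
Definition quad {R : realType} {n : nat} (Q : 'M[R]_n) (x : 'rV[R]_n) : R :=
  (x *m Q *m x^T) 0 0.

Definition sym_posdef {R : realType} {n : nat} (Q : 'M[R]_n) : Prop :=
  Q^T = Q /\ forall x : 'rV[R]_n, x != 0 -> 0 < quad Q x.

Definition ellipsoid {R : realType} {n : nat} (Q : 'M[R]_n) : set 'rV[R]_n :=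
  [set x | quad Q x <= 1].

Definition C1 {R : realType} {n : nat} (f : 'rV[R]_n -> 'rV[R]_n) : Prop :=
  (forall x, differentiable f x) /\
  continuous (fun x : 'rV[R]_n => lin1_mx ('d f x : 'rV[R]_n -> 'rV[R]_n)).

Definition concave_on_Rn {R : realType} {n : nat} (g : 'rV[R]_n -> R) : Prop :=
  forall (t : R) (x y : 'rV[R]_n), 0 <= t <= 1 ->
    t * g x + (1 - t) * g y <= g (t *: x + (1 - t) *: y).

Definition invariant_set {R : realType} {n : nat}
    (fd : 'rV[R]_n -> 'rV[R]_n) (S : set 'rV[R]_n) : Prop :=
  forall xs : nat -> 'rV[R]_n, (forall k, xs k.+1 = fd (xs k)) ->
    forall k, S (xs k) -> S (xs k.+1).

(* Main.v *)
Set Warnings "-all".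
Require Import Defs.
From HB Require Import structures.
From mathcomp Require Import all_boot all_order all_algebra.
From mathcomp Require Import all_classical all_reals all_analysis.
From mathcomp Require Import ring lra.
Import Order.TTheory GRing.Theory Num.Theory.
Import numFieldNormedType.Exports.
Local Open Scope ring_scope.

Section Q.
Context {R : realType} {n : nat} (Q : 'M[R]_n).
Definition bil (x y : 'rV[R]_n) := (x *m Q *m y^T) 0 0.

Lemma bilC : Q^T = Q -> forall x y, bil x y = bil y x.
Proof.
move=> hQ x y; rewrite /bil.
have tr1 : forall M : 'M[R]_1, M^T 0 0 = M 0 0 by move=> M; rewrite mxE.
rewrite -[RHS]tr1.
by rewrite !trmx_mul trmxK hQ mulmxA.
Qed.

Lemma bilDl x y z : bil (x + y) z = bil x z + bil y z.
Proof. by rewrite /bil !mulmxDl mxE. Qed.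
Lemma bilDr x y z : bil z (x + y) = bil z x + bil z y.
Proof. by rewrite /bil linearD /= !mulmxDr mxE. Qed.
Lemma bilZl a x y : bil (a *: x) y = a * bil x y.
Proof. by rewrite /bil -!scalemxAl mxE. Qed.
Lemma bilZr a x y : bil x (a *: y) = a * bil x y.
Proof. by rewrite /bil linearZ /= -!scalemxAr mxE. Qed.

Lemma quad_convex : sym_posdef Q -> forall t x y, 0 <= t <= 1 ->
  quad Q (t *: x + (1 - t) *: y) <= t * quad Q x + (1 - t) * quad Q y.
Proof.
move=> [hQ hpos] t x y /andP[t0 t1].
have hq : 0 <= quad Q (x - y).
  have [->|nz] := eqVneq (x - y) 0.
    by rewrite /quad mul0mx mul0mx mxE.
  exact/ltW/hpos.
have E : forall z, quad Q z = bil z z by [].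
move: hq; rewrite !E !bilDl !bilDr !bilZl !bilZr.
rewrite -scaleN1r !bilZl !bilZr (bilC hQ y x).
move=> hq.
have h1t : 0 <= 1 - t by lra.
have := mulr_ge0 (mulr_ge0 t0 h1t) hq. nra.
Qed.
End Q.



Theorem theorem5 (R : realType) (n : nat) (Q : 'M[R]_n)
    (fd : 'rV[R]_n -> 'rV[R]_n) :
  sym_posdef Q -> C1 fd -> concave_on_Rn (fun x => quad Q (fd x)) ->
  (invariant_set fd (ellipsoid Q) <->
   exists beta : R, 0 <= beta /\
     forall x : 'rV[R]_n, beta * quad Q x - quad Q (fd x) >= beta - 1).
Proof.
move=> hQ _ hconc; split; last first.
  move=> [beta [b0 hb]] xs hxs k; rewrite /ellipsoid /= hxs => hk.
  have := hb (xs k); have : beta * quad Q (xs k) <= beta * 1 by rewrite ler_wpM2l.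
  lra.
move=> hinv.
set q := quad Q; set g := fun x => quad Q (fd x).
have H : forall x, q x <= 1 -> g x <= 1.
  move=> x hx; have := hinv (fun k => iter k fd x) (fun k => erefl) 0%N hx.
  by [].
have q0 : q 0 = 0 by rewrite /q /quad mul0mx mul0mx mxE.
have key : forall x y, q x < 1 -> 1 < q y ->
    (g y - 1) * (1 - q x) <= (1 - g x) * (q y - 1).
  move=> x y hx hy.
  have d0 : 0 < q y - q x by lra.
  set t := (q y - 1) / (q y - q x).
  have ht1 : t * (q y - q x) = q y - 1 by rewrite /t mulfVK // gt_eqF.
  have ht : 0 <= t <= 1.
    apply/andP; split; first by rewrite /t divr_ge0 // ?ltW // subr_gt0.
    by rewrite /t ler_pdivrMr // mul1r; lra.
  have hz := @quad_convex _ _ Q hQ t x y ht.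
  have e : t * q x + (1 - t) * q y = 1 by move: ht1; rewrite mulrBr mulrBl mul1r; lra.
  have hz1 : q (t *: x + (1 - t) *: y) <= 1.
    by apply: le_trans hz _; rewrite -/q e.
  have e2 : (1 - t) * (q y - q x) = 1 - q x by rewrite mulrBl mul1r ht1; lra.
  have := H _ hz1; have := hconc t x y ht; rewrite -/g => c1 c2.
  have c3 : t * g x + (1 - t) * g y <= 1 by exact: le_trans c1 c2.
  have := ler_wpM2r (ltW d0) c3.
  have -> : (t * g x + (1 - t) * g y) * (q y - q x)
    = g x * (t * (q y - q x)) + g y * ((1 - t) * (q y - q x)) by ring.
  rewrite ht1 e2 mul1r => c4.
  have -> : (g y - 1) * (1 - q x) = g y * (1 - q x) - 1 + q x by ring.
  have -> : (1 - g x) * (q y - 1) = q y - 1 - g x * (q y - 1) by ring.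
  lra.
pose A := [set r : R | exists y, 1 < q y /\ r = (g y - 1) / (q y - 1)]%classic.
have ubA : forall r, A r -> r <= 1 - g 0.
  move=> r [y [hy ->]].
  have := key 0 y; rewrite q0 => /(_ ltr01 hy); rewrite subr0 mulr1 => k.
  by rewrite ler_pdivrMr ?subr_gt0.
exists (Num.max 0 (sup A)); split; first by rewrite le_max lexx.
move=> x.
have [hx|hx|hx] := ltgtP (q x) 1.
-
  set c := (1 - g x) / (1 - q x).
  have c0 : 0 <= c by rewrite /c divr_ge0 // subr_ge0 ?H // ltW.
  have bc : Num.max 0 (sup A) <= c.
    rewrite ge_max c0 /=.
    have [->|ne] := eqVneq A set0; first by rewrite sup0.
    apply: ge_sup; first exact/set0P.
    move=> r [y [hy ->]]; rewrite /c ler_pdivrMr ?subr_gt0 //.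
    rewrite mulrAC ler_pdivlMr ?subr_gt0 //.
    exact: key.
  have hx1 : 0 < 1 - q x by rewrite subr_gt0.
  have := ler_wpM2r (ltW hx1) bc.
  rewrite /c mulfVK ?gt_eqF ?subr_gt0 //.
  change (q (fd x)) with (g x); rewrite mulrBr mulr1; lra.
-
  have inA : A ((g x - 1) / (q x - 1)) by exists x.
  have hs : (g x - 1) / (q x - 1) <= Num.max 0 (sup A).
    rewrite le_max; apply/orP; right; apply: sup_upper_bound => //.
    split; first by exists ((g x - 1) / (q x - 1)).
    by exists (1 - g 0) => r /ubA.
  move: hs; rewrite ler_pdivrMr ?subr_gt0 // => hs.
  change (q (fd x)) with (g x); move: hs; rewrite mulrBr mulr1; lra.
- change (q (fd x)) with (g x); rewrite hx; have := H x; rewrite hx lexx => /(_ isT); lra.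
Qed.
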